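(* An LR triple is uniquely determined up to isomorphism by its parameter array and trace data. That is, if $A,B,C$ on $V$ and $A',B',C'$ on $V'$ are LR triples over $\mathbb F$ of the same diameter with the same parameter array and the same trace data, then they are isomorphic.
   Context: Let $V$ be a vector space over a field $\mathbb F$ with $\dim V=d+1$. A decomposition of $V$ is a sequence $(V_i)_{i=0}^d$ of one-dimensional subspaces with $V=\bigoplus V_i$; $X$ lowers it if $XV_i=V_{i-1}$ ($1\le i\le d$), $XV_0=0$; raises it if $XV_i=V_{i+1}$ ($0\le i\le d-1$), $XV_d=0$. An ordered pair $X,Y\in\mathrm{End}(V)$ is an LR pair if some decomposition (unique, the $(X,Y)$-decomposition) is lowered by $X$ and raised by $Y$; for $1\le i\le d$ the $i$-th component is invariant under $YX$ with nonzero eigenvalue, giving the parameter sequence. An LR triple on $V$ is $A,B,C\in\mathrm{End}(V)$ with $A,B$; $B,C$; $C,A$ all LR pairs. Its parameter array is $(\{\varphi_i\};\{\varphi'_i\};\{\varphi''_i\})$, the parameter sequences of $A,B$; $B,C$; $C,A$. Let $E_i,E'_i,E''_i$ ($0\le i\le d$) be the projections onto the $i$-th components of the $(A,B)$-, $(B,C)$-, $(C,A)$-decompositions respectively (along the other components). The trace data is $(\{a_i\};\{a'_i\};\{a''_i\})$ with $a_i=\mathrm{tr}(CE_i)$, $a'_i=\mathrm{tr}(AE'_i)$, $a''_i=\mathrm{tr}(BE''_i)$. LR triples are isomorphic if some linear bijection $\sigma:V\to V'$ satisfies $\sigma A=A'\sigma$, $\sigma B=B'\sigma$, $\sigma C=C'\sigma$.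 *)

(* Defs.v *)
From HB Require Import structures.
From mathcomp Require Import all_boot all_order all_algebra.
Set Implicit Arguments. Unset Strict Implicit. Unset Printing Implicit Defensive.
Import GRing.Theory.
Local Open Scope ring_scope.

(* Conventions: V = row vectors 'rV[F]_(d.+1); an endomorphism X of V is a
   matrix acting on the right (v |-> v *m X); a subspace of V is the row
   space of a square matrix (mxalgebra, scope %MS).  Hence the composite
   "Y X" (first X, then Y) is the matrix X *m Y.  A decomposition
   (V_i)_{i=0}^d is a function Vs : nat -> 'M_(d.+1) whose values for
   i <= d are the components. *)

Section LR.
Variables (F : fieldType) (d : nat).
Local Notation M := 'M[F]_(d.+1).

Definition is_decomp (Vs : nat -> M) : Prop :=
  [/\ forall i, (i <= d)%N -> \rank (Vs i) = 1%N,
      mxdirect (\sum_(i < d.+1) Vs i)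
    & (\sum_(i < d.+1) Vs i == 1%:M)%MS].

Definition lowers (X : M) (Vs : nat -> M) : Prop :=
  (forall i, (1 <= i <= d)%N -> (Vs i *m X == Vs i.-1)%MS) /\
  (Vs 0%N *m X == (0 : M))%MS.

Definition raises (Y : M) (Vs : nat -> M) : Prop :=
  (forall i, (i < d)%N -> (Vs i *m Y == Vs i.+1)%MS) /\
  (Vs d *m Y == (0 : M))%MS.

Definition LR_pair (X Y : M) : Prop :=
  exists Vs, [/\ is_decomp Vs, lowers X Vs & raises Y Vs].

Definition LR_triple (A B C : M) : Prop :=
  [/\ LR_pair A B, LR_pair B C & LR_pair C A].

Definition comp_proj (Vs : nat -> M) (i : nat) : M :=
  proj_mx (Vs i) (\sum_(j < d.+1 | nat_of_ord j != i) Vs j)%MS.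

(* pair_data X Y Z phi a : the (X,Y)-decomposition Vs has parameter
   sequence phi (V_i is YX-invariant with eigenvalue phi i, 1 <= i <= d),
   and a i = tr(Z E_i) for the projections E_i onto its components
   (0 <= i <= d).  Since the (X,Y)-decomposition is unique, the existential
   just names it. *)
Definition pair_data (X Y Z : M) (phi a : nat -> F) : Prop :=
  exists Vs, [/\ is_decomp Vs, lowers X Vs, raises Y Vs,
    (forall i, (1 <= i <= d)%N -> Vs i *m (X *m Y) = phi i *: Vs i)
  & (forall i, (i <= d)%N -> \tr (comp_proj Vs i *m Z) = a i)].

Definition triple_data (A B C : M) (phi phi' phi'' a a' a'' : nat -> F) : Prop :=
  [/\ pair_data A B C phi a, pair_data B C A phi' a' & pair_data C A B phi'' a''].

Definition LR_iso (A B C A' B' C' : M) : Prop :=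
  exists2 S : M, S \in unitmx &
    [/\ A *m S = S *m A', B *m S = S *m B' & C *m S = S *m C'].

End LR.

(* Main.v *)
Require Import Defs.
From HB Require Import structures.
From mathcomp Require Import all_boot all_order all_algebra zify.
Set Implicit Arguments. Unset Strict Implicit. Unset Printing Implicit Defensive.
Import GRing.Theory.
Local Open Scope ring_scope.

Definition Ge (F : fieldType) (d : nat) (p : nat -> 'rV[F]_(d.+1)) (k : nat) : 'M[F]_(d.+1) :=
  \matrix_(l < d.+1) (if (k <= l)%N then p l else 0).
Definition Lt (F : fieldType) (d : nat) (p : nat -> 'rV[F]_(d.+1)) (k : nat) : 'M[F]_(d.+1) :=
  \matrix_(l < d.+1) (if (l < k)%N then p l else 0).
Definition PM (F : fieldType) (d : nat) (p : nat -> 'rV[F]_(d.+1)) : 'M[F]_(d.+1) :=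
  \matrix_(l < d.+1) p l.
Definition RA (F : fieldType) (d : nat) (p : nat -> 'rV[F]_(d.+1)) (Y : 'M[F]_(d.+1)) :=
  (forall l, (l < d)%N -> p l *m Y = p l.+1) /\ p d *m Y = 0.
Definition LO (F : fieldType) (d : nat) (p : nat -> 'rV[F]_(d.+1)) (X : 'M[F]_(d.+1)) (phi : nat -> F) :=
  (forall l, (0 < l <= d)%N -> p l *m X = phi l *: p l.-1) /\ p 0%N *m X = 0.

Lemma RA_pow (F : fieldType) (d : nat) (p : nat -> 'rV[F]_(d.+1)) Y :
  RA p Y -> forall k m, (m + k <= d)%N -> p (m + k)%N = p m *m Y ^+ k.
Proof.
move=> [HR _]; elim=> [|k IH] m hm; first by rewrite addn0 expr0 mulmx1.
have h1 : (m + k < d)%N by rewrite -addnS.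
by rewrite addnS -(HR _ h1) (IH m (ltnW h1)) exprSr -mulmxA.
Qed.

Lemma Ge_sub_pow (F : fieldType) (d : nat) (p : nat -> 'rV[F]_(d.+1)) Y k :
  RA p Y -> (Ge p k <= Y ^+ k)%MS.
Proof.
move=> HR; apply/row_subP=> l; rewrite rowK.
case: ifP=> hkl; last by rewrite sub0mx.
have -> : nat_of_ord l = ((l - k) + k)%N by rewrite subnK.
rewrite (RA_pow HR); first exact: submxMl.
by rewrite subnK // -ltnS.
Qed.

Lemma Ge0 (F : fieldType) (d : nat) (p : nat -> 'rV[F]_(d.+1)) : Ge p 0 = PM p.
Proof. by apply/row_matrixP=> l; rewrite !rowK. Qed.

Lemma Ltd (F : fieldType) (d : nat) (p : nat -> 'rV[F]_(d.+1)) : Lt p d.+1 = PM p.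
Proof. by apply/row_matrixP=> l; rewrite !rowK ltn_ord. Qed.

Lemma GeY (F : fieldType) (d : nat) (p : nat -> 'rV[F]_(d.+1)) Y k :
  RA p Y -> (Ge p k *m Y <= Ge p k.+1)%MS.
Proof.
move=> [HR Hd]; apply/row_subP=> l; rewrite row_mul rowK.
case: ifP=> hkl; last by rewrite mul0mx sub0mx.
have [ld|ld] := ltnP l d.
  rewrite HR //.
  have -> : p l.+1 = row (Ordinal (ld : (l.+1 < d.+1)%N)) (Ge p k.+1).
    by rewrite rowK /= ltnS hkl.
  exact: row_sub.
have -> : nat_of_ord l = d by apply/eqP; rewrite eqn_leq ld -ltnS ltn_ord.
by rewrite Hd sub0mx.
Qed.

Lemma pow_sub_Ge (F : fieldType) (d : nat) (p : nat -> 'rV[F]_(d.+1)) Y k :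
  PM p \in unitmx -> RA p Y -> (Y ^+ k <= Ge p k)%MS.
Proof.
move=> Pu HR; elim: k=> [|k IH].
  by rewrite expr0 Ge0 sub1mx row_full_unit.
rewrite exprSr; apply: submx_trans (GeY k HR); exact: submxMr.
Qed.

Lemma LtX (F : fieldType) (d : nat) (p : nat -> 'rV[F]_(d.+1)) X phi m :
  LO p X phi -> (Lt p m *m X <= Lt p m.-1)%MS.
Proof.
move=> [HL H0]; apply/row_subP=> l; rewrite row_mul rowK.
case: ifP=> hlm; last by rewrite mul0mx sub0mx.
case: (posnP l)=> hl.
  by rewrite hl H0 sub0mx.
have hld : (0 < l <= d)%N by have := ltn_ord l; lia.
rewrite (HL _ hld); apply: scalemx_sub.
have hl1 : (l.-1 < d.+1)%N by lia.
have -> : p l.-1 = row (Ordinal hl1) (Lt p m.-1).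
  by rewrite rowK /=; case: ifP=> // /negbT; lia.
exact: row_sub.
Qed.

Lemma pow_sub_Lt (F : fieldType) (d : nat) (p : nat -> 'rV[F]_(d.+1)) X phi k :
  PM p \in unitmx -> LO p X phi -> (X ^+ k <= Lt p (d.+1 - k))%MS.
Proof.
move=> Pu HL; elim: k=> [|k IH].
  by rewrite expr0 subn0 Ltd sub1mx row_full_unit.
rewrite exprSr subnS; apply: submx_trans (LtX _ HL); exact: submxMr.
Qed.

Lemma Lt_sub_pow (F : fieldType) (d : nat) (p : nat -> 'rV[F]_(d.+1)) X phi k :
  LO p X phi -> (forall l, (0 < l <= d)%N -> phi l != 0) ->
  (Lt p (d.+1 - k) <= X ^+ k)%MS.
Proof.
move=> [HL H0] Hnz; elim: k=> [|k IH].
  by rewrite expr0 submx1.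
apply/row_subP=> l; rewrite rowK; case: ifP=> hl; last by rewrite sub0mx.
have hl1 : (l.+1 < d.+1)%N by lia.
have hd : (0 < l.+1 <= d)%N by lia.
have -> : p l = (phi l.+1)^-1 *: (p l.+1 *m X).
  by rewrite HL // scalerA mulVf ?Hnz // scale1r.
apply: scalemx_sub; rewrite exprSr; apply: submxMr.
apply: submx_trans IH.
have -> : p l.+1 = row (Ordinal hl1) (Lt p (d.+1 - k)).
  by rewrite rowK /=; case: ifP=> // /negbT; lia.
exact: row_sub.
Qed.

Lemma in_Lt (F : fieldType) (d : nat) (p : nat -> 'rV[F]_(d.+1)) l j :
  (l < j)%N -> (l < d.+1)%N -> (p l <= Lt p j)%MS.
Proof.
move=> hlj hl; have -> : p l = row (Ordinal hl) (Lt p j) by rewrite rowK /= hlj.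
exact: row_sub.
Qed.

Lemma in_Ge (F : fieldType) (d : nat) (p : nat -> 'rV[F]_(d.+1)) l j :
  (j <= l)%N -> (l < d.+1)%N -> (p l <= Ge p j)%MS.
Proof.
move=> hlj hl; have -> : p l = row (Ordinal hl) (Ge p j) by rewrite rowK /= hlj.
exact: row_sub.
Qed.

Lemma pXY (F : fieldType) (d : nat) (p : nat -> 'rV[F]_(d.+1)) X Y phi :
  LO p X phi -> RA p Y -> forall l, (0 < l <= d)%N -> p l *m (X *m Y) = phi l *: p l.
Proof.
move=> [HL _] [HR _] l hl; rewrite mulmxA HL // -scalemxAl HR; last by lia.
by rewrite prednK //; case/andP: hl.
Qed.

Lemma graded_Lt (F : fieldType) (d : nat) (p : nat -> 'rV[F]_(d.+1)) X Y phi j :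
  LO p X phi -> RA p Y -> (0 < j)%N ->
  (Lt p j.+1 *m (X *m Y) - phi j *: Lt p j.+1 <= Lt p j)%MS.
Proof.
move=> HL HR hj; apply/row_subP=> l.
rewrite linearB linearZ /= row_mul rowK.
case: ifP=> hl; last by rewrite mul0mx scaler0 subr0 sub0mx.
case: (posnP l)=> hl0.
  rewrite hl0 mulmxA HL.2 mul0mx sub0r -scaleNr; apply: scalemx_sub.
  exact: in_Lt.
have hld : (0 < l <= d)%N by have := ltn_ord l; lia.
rewrite (pXY HL HR hld) -scalerBl.
have [->|hne] := eqVneq (nat_of_ord l) j; first by rewrite subrr scale0r sub0mx.
apply: scalemx_sub; apply: in_Lt => //; lia.
Qed.

Lemma graded_Ge (F : fieldType) (d : nat) (p : nat -> 'rV[F]_(d.+1)) X Y phi k :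
  LO p X phi -> RA p Y -> (0 < k)%N ->
  (Ge p k *m (X *m Y) - phi k *: Ge p k <= Ge p k.+1)%MS.
Proof.
move=> HL HR hk; apply/row_subP=> l.
rewrite linearB linearZ /= row_mul rowK.
case: ifP=> hl; last by rewrite mul0mx scaler0 subr0 sub0mx.
have hld : (0 < l <= d)%N by have := ltn_ord l; lia.
rewrite (pXY HL HR hld) -scalerBl.
have [->|hne] := eqVneq (nat_of_ord l) k; first by rewrite subrr scale0r sub0mx.
apply: scalemx_sub; apply: in_Ge => //; lia.
Qed.

Lemma PM_inv_row (F : fieldType) (d : nat) (p : nat -> 'rV[F]_(d.+1)) (l : 'I_d.+1) :
  PM p \in unitmx -> p l *m invmx (PM p) = delta_mx 0 l.
Proof.
by move=> Pu; rewrite -[p l](rowK (fun l : 'I_d.+1 => p l)) -row_mul mulmxV // row1.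
Qed.

Lemma coord_Ge (F : fieldType) (d : nat) (p : nat -> 'rV[F]_(d.+1)) (z : 'rV_(d.+1)) m :
  PM p \in unitmx -> (z <= Ge p m)%MS ->
  forall k : 'I_(d.+1), (k < m)%N -> (z *m invmx (PM p)) 0 k = 0.
Proof.
move=> Pu /submxP [w ->] k hk; rewrite -mulmxA.
have -> : Ge p m *m invmx (PM p) =
    \matrix_(l < d.+1) (if (m <= l)%N then delta_mx 0 l else 0 : 'rV_(d.+1)).
  apply/row_matrixP=> l; rewrite row_mul !rowK; case: ifP=> _; last by rewrite mul0mx.
  exact: PM_inv_row.
rewrite mxE big1 // => l _; rewrite !mxE; case: ifP=> h; last by rewrite mxE mulr0.
rewrite mxE eqxx /=; case: eqP=> [kl|]; last by rewrite mulr0.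
by move: h; rewrite -kl leqNgt hk.
Qed.

Lemma coord_Lt (F : fieldType) (d : nat) (p : nat -> 'rV[F]_(d.+1)) (z : 'rV_(d.+1)) m :
  PM p \in unitmx -> (z <= Lt p m)%MS ->
  forall k : 'I_(d.+1), (m <= k)%N -> (z *m invmx (PM p)) 0 k = 0.
Proof.
move=> Pu /submxP [w ->] k hk; rewrite -mulmxA.
have -> : Lt p m *m invmx (PM p) =
    \matrix_(l < d.+1) (if (l < m)%N then delta_mx 0 l else 0 : 'rV_(d.+1)).
  apply/row_matrixP=> l; rewrite row_mul !rowK; case: ifP=> _; last by rewrite mul0mx.
  exact: PM_inv_row.
rewrite mxE big1 // => l _; rewrite !mxE; case: ifP=> h; last by rewrite mxE mulr0.
rewrite mxE eqxx /=; case: eqP=> [kl|]; last by rewrite mulr0.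
by move: h; rewrite -kl ltnNge hk.
Qed.

Lemma rank1_gen (F : fieldType) (n : nat) (M : 'M[F]_n) :
  \rank M = 1%N -> exists v : 'rV[F]_n, (M :=: v)%MS.
Proof.
move=> hr; case: (pickP (fun i => row i M != 0)) => [i hi | h].
  exists (row i M); apply/eqmx_sym/eqmxP.
  by rewrite -(mxrank_leqif_eq (row_sub i M)).2 rank_rV hi hr.
have M0 : M = 0.
  by apply/row_matrixP=> i; rewrite row0; move: (h i) => /= /negbFE/eqP.
by move: hr; rewrite M0 mxrank0.
Qed.

Lemma basis_of_pair (F : fieldType) (d : nat) (X Y Z : 'M[F]_(d.+1)) phi a :
  pair_data X Y Z phi a -> exists p : nat -> 'rV[F]_(d.+1),
  [/\ PM p \in unitmx, RA p Y, LO p X phi, (forall l, (0 < l <= d)%N -> phi l != 0)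
    & forall i : 'I_(d.+1), (PM p *m Z *m invmx (PM p)) i i = a i].
Proof.
case=> Vs [[Hrk Hdir Hsum] [Hlow Hlow0] [Hrai Hraid] Heig Htr].
have [p0 Hp0] := rank1_gen (Hrk 0%N (leq0n d)).
pose p l := p0 *m Y ^+ l.
have Hpe : forall l, (l <= d)%N -> (Vs l :=: p l)%MS.
  elim=> [|l IH] hl; first by rewrite /p expr0 mulmx1.
  apply: eqmx_trans (eqmx_sym (eqmxP (Hrai l hl))) _.
  rewrite /p exprSr mulmxA; apply: eqmxMr; exact: IH (ltnW hl).
have Hpnz : forall l, (l <= d)%N -> p l != 0.
  move=> l hl; have := Hrk l hl; have /eqmxP/eqmx_rank -> := Hpe l hl.
  by rewrite rank_rV; case: (p l != 0).
have HpV : forall l, (l <= d)%N -> (p l <= Vs l)%MS.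
  by move=> l hl; rewrite (Hpe l hl).
have HRA : RA p Y.
  split; first by move=> l _; rewrite /p exprSr mulmxA.
  apply/eqP; rewrite -submx0; apply: (submx_trans (submxMr Y (HpV d (leqnn d)))).
  by case/andP: Hraid.
have HVp : forall l, (l <= d)%N -> (Vs l <= p l)%MS.
  by move=> l hl; rewrite -(Hpe l hl).
have Hrk1 : forall l, (0 < l <= d)%N -> \rank (p l *m X) = 1%N.
  move=> l hl; have hld : (l <= d)%N by case/andP: hl.
  rewrite -(eqmx_rank (introT eqmxP (eqmxMr X (Hpe l hld)))).
  rewrite (eqmx_rank (Hlow l hl)) Hrk //; exact: leq_trans (leq_pred l) hld.
have HLO : LO p X phi.
  split; last first.
    apply/eqP; rewrite -submx0; apply: (submx_trans (submxMr X (HpV 0%N (leq0n d)))).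
    by case/andP: Hlow0.
  move=> l hl; have hld : (l <= d)%N by case/andP: hl.
  have hl1 : (l.-1 <= d)%N by exact: leq_trans (leq_pred l) hld.
  have Hsub : (p l *m X <= p l.-1)%MS.
    apply: (submx_trans (submxMr X (HpV l hld))).
    apply: submx_trans (HVp _ hl1); by case/andP: (Hlow l hl).
  case/sub_rVP: Hsub => c Hc.
  have Heig' : p l *m (X *m Y) = phi l *: p l.
    by have [w ->] := submxP (HpV l hld); rewrite -mulmxA Heig // scalemxAr.
  have : p l *m (X *m Y) = c *: p l.
    rewrite mulmxA Hc -scalemxAl (proj1 HRA); last by case: (l) hl => //= l' /andP[_]; lia.
    by rewrite prednK //; case/andP: hl.
  rewrite Heig' => /eqP; rewrite -subr_eq0 -scalerBl scaler_eq0 (negbTE (Hpnz l hld)) orbF.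
  by rewrite subr_eq0 Hc => /eqP ->.
have Pu : PM p \in unitmx.
  rewrite -row_full_unit -sub1mx.
  apply: (submx_trans (_ : 1%:M <= \sum_(i < d.+1) Vs i)%MS); first by case/andP: Hsum.
  apply/sumsmx_subP => i _; apply: submx_trans (HVp i _) _; first by rewrite -ltnS.
  rewrite -[p i](rowK (fun l : 'I_d.+1 => p l)); exact: row_sub.
exists p; split => //.
- move=> l hl; apply/eqP=> h0; move: (Hrk1 l hl); rewrite (proj1 HLO l hl) h0 scale0r.
  by rewrite mxrank0.
have dir : forall i : 'I_(d.+1),
    (Vs i :&: \sum_(j < d.+1 | nat_of_ord j != nat_of_ord i) Vs j)%MS = 0.
  move: Hdir => /mxdirect_sumsP H i.
  have <- : (\sum_(j : 'I_d.+1 | true && (j != i)) Vs j)%MS =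
            (\sum_(j < d.+1 | nat_of_ord j != nat_of_ord i) Vs j)%MS by apply: eq_bigl.
  exact: H i isT.
have Hproj : forall i : 'I_(d.+1),
    comp_proj Vs i = invmx (PM p) *m delta_mx i i *m PM p.
  move=> i; have E : PM p *m comp_proj Vs i = delta_mx i i *m PM p.
    apply/row_matrixP => l; rewrite !row_mul rowK rowE mul_delta_mx_cond.
    rewrite /comp_proj; case: eqP => [->|ne].
      have hi : (i <= d)%N by rewrite -ltnS.
      by rewrite mulr1n proj_mx_id ?(HpV _ hi) // -rowE rowK.
    rewrite mulr0n mul0mx proj_mx_0 //.
    apply: (sumsmx_sup l); first by apply/eqP => h; apply: ne; exact: val_inj.
    by rewrite HpV // -ltnS.
  by rewrite -mulmxA -E mulKmx.
move=> i; have hi : (i <= d)%N by rewrite -ltnS.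
rewrite -(Htr _ hi) Hproj.
rewrite -!mulmxA mxtrace_mulC -!mulmxA.
rewrite -(mul_delta_mx (0 : 'I_1)) -mulmxA mxtrace_mulC trace_mx11.
by rewrite -!mulmxA -rowE !mulmxA -colE !mxE.
Qed.

Definition MA (F : fieldType) (d : nat) (phi : nat -> F) : 'M[F]_(d.+1) :=
  \matrix_(i, j) (if (nat_of_ord i == (nat_of_ord j).+1)%N then phi i else 0).
Definition MB (F : fieldType) (d : nat) : 'M[F]_(d.+1) :=
  \matrix_(i, j) (if (nat_of_ord j == (nat_of_ord i).+1)%N then 1 else 0).
Definition MC (F : fieldType) (d : nat) (phi phi' phi'' a : nat -> F) : 'M[F]_(d.+1) :=
  \matrix_(i, j) (if ((nat_of_ord j).+1 == nat_of_ord i)%N then phi' (d - i)%N.+1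
                  else if (nat_of_ord i == nat_of_ord j)%N then a i
                  else if (nat_of_ord j == (nat_of_ord i).+1)%N then phi'' (d - i)%N / phi j
                  else 0).

Lemma mulPM (F : fieldType) (d : nat) (p : nat -> 'rV[F]_(d.+1)) (u : 'rV[F]_(d.+1)) :
  u *m PM p = \sum_j u 0 j *: p j.
Proof. by rewrite mulmx_sum_row; apply: eq_bigr => j _; rewrite rowK. Qed.

Lemma sum_single (V : nmodType) (n : nat) (f : 'I_n -> V) (j0 : 'I_n) :
  (forall j, j != j0 -> f j = 0) -> \sum_j f j = f j0.
Proof. by move=> H; rewrite (bigD1 j0) //= big1 ?addr0 // => j /H. Qed.

Lemma PM_A (F : fieldType) (d : nat) (p : nat -> 'rV[F]_(d.+1)) A phi :
  LO p A phi -> PM p *m A = MA d phi *m PM p.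
Proof.
move=> [HL H0]; apply/row_matrixP=> l; rewrite !row_mul rowK mulPM.
case: (posnP l) => hl.
  rewrite hl H0 big1 // => j _; rewrite !mxE hl /= scale0r //.
have hl1 : (l.-1 < d.+1)%N by have := ltn_ord l; lia.
rewrite (@sum_single _ _ _ (Ordinal hl1)) /=.
  rewrite !mxE prednK // eqxx HL //; have := ltn_ord l; lia.
move=> j hj; rewrite !mxE; case: eqP => [e|]; last by rewrite scale0r.
by case/eqP: hj; apply: val_inj => /=; rewrite e.
Qed.

Lemma PM_B (F : fieldType) (d : nat) (p : nat -> 'rV[F]_(d.+1)) B :
  RA p B -> PM p *m B = MB F d *m PM p.
Proof.
move=> [HR Hd]; apply/row_matrixP=> l; rewrite !row_mul rowK mulPM.
have [ld|ld] := ltnP l d.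
  have hl1 : (l.+1 < d.+1)%N by [].
  rewrite (@sum_single _ _ _ (Ordinal hl1)) /=.
    by rewrite !mxE eqxx scale1r HR.
  move=> j hj; rewrite !mxE; case: eqP => [e|]; last by rewrite scale0r.
  by case/eqP: hj; apply: val_inj => /=; rewrite e.
have -> : nat_of_ord l = d by have := ltn_ord l; lia.
rewrite Hd big1 // => j _; rewrite !mxE.
case: eqP => [e|]; last by rewrite scale0r.
by have := ltn_ord j; lia.
Qed.

Lemma sub_graded (F : fieldType) (n m : nat) (y : 'rV[F]_n) (G : 'M[F]_(m, n)) (M : 'M[F]_n)
    (H : 'M[F]_(m, n)) c :
  (y <= G)%MS -> (G *m M - c *: G <= H)%MS -> (y *m M - c *: y <= H)%MS.
Proof.
case/submxP=> w -> h; rewrite -mulmxA scalemxAr -mulmxBr.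
exact: submx_trans (submxMl w _) h.
Qed.

Lemma PM_inv_nat (F : fieldType) (d : nat) (p : nat -> 'rV[F]_(d.+1)) l :
  PM p \in unitmx -> (l < d.+1)%N -> p l *m invmx (PM p) = delta_mx 0 (inord l).
Proof.
move=> Pu hl; have := @PM_inv_row _ _ p (inord l) Pu; by rewrite inordK.
Qed.

Lemma triple_normal (F : fieldType) (d : nat) (A B C : 'M[F]_(d.+1))
    (phi phi' phi'' a a' a'' : nat -> F) :
  triple_data A B C phi phi' phi'' a a' a'' ->
  exists P : 'M[F]_(d.+1), [/\ P \in unitmx, P *m A = MA d phi *m P,
     P *m B = MB F d *m P & P *m C = MC d phi phi' phi'' a *m P].
Proof.
case=> /basis_of_pair [p [Pu HRp HLp Hnz Htr]] /basis_of_pair [q [Qu HRq HLq Hnzq _]]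
       /basis_of_pair [r [Ru HRr HLr _ _]].
set P := PM p.
have PA := PM_A HLp; have PB := PM_B HRp.
exists P; split => //.
set N := P *m C *m invmx P.
have Nrow : forall (i j : 'I_(d.+1)), N i j = (p i *m C *m invmx P) 0 j.
  move=> i j; have -> : N i j = row i N 0 j by rewrite !mxE.
  by rewrite /N !row_mul rowK.
have H3 : forall (i k : 'I_(d.+1)), (0 < i)%N -> (k < i)%N ->
    N i k = if (k.+1 == i)%N then phi' (d - i)%N.+1 else 0.
  move=> i k hi hk.
  have hz : (p i *m C - phi' (d - i)%N.+1 *: p i.-1 <= Ge p i)%MS.
    have hi1 : (i.-1 < d.+1)%N by have := ltn_ord i; lia.
    have -> : p i *m C = p i.-1 *m (B *m C).
      by rewrite mulmxA (proj1 HRp) ?prednK //; have := ltn_ord i; lia.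
    apply: (sub_graded (G := Lt q (d - i)%N.+2)).
      apply: submx_trans (in_Ge p (leqnn _) hi1) _.
      apply: submx_trans (Ge_sub_pow _ HRp) _.
      have -> : (d - i)%N.+2 = (d.+1 - i.-1)%N by have := ltn_ord i; lia.
      exact: pow_sub_Lt Qu HLq.
    apply: submx_trans (graded_Lt HLq HRq (ltn0Sn _)) _.
    have -> : (d - i)%N.+1 = (d.+1 - i)%N by have := ltn_ord i; lia.
    apply: submx_trans (Lt_sub_pow i HLq Hnzq) _.
    exact: pow_sub_Ge Pu HRp.
  have := coord_Ge Pu hz hk.
  rewrite mulmxBl -scalemxAl PM_inv_nat //; last by have := ltn_ord i; lia.
  rewrite mxE -Nrow !mxE => /eqP; rewrite subr_eq0 => /eqP ->.
  rewrite eqxx /=.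
  have -> : (k == inord i.-1) = (k.+1 == i)%N.
    rewrite -val_eqE /= inordK; last by have := ltn_ord i; lia.
    by apply/eqP/eqP; lia.
  by case: (k.+1 == i)%N; rewrite ?mulr1 ?mulr0.
have H4 : forall (i k : 'I_(d.+1)), (i <= k)%N -> (k < d)%N ->
    N i (inord k.+1) * phi k.+1 = if (nat_of_ord k == nat_of_ord i)%N then phi'' (d - i)%N else 0.
  move=> i k hik hk.
  have hz : (p i *m C *m A - phi'' (d - i)%N *: p i <= Lt p i)%MS.
    rewrite -mulmxA; apply: (sub_graded (G := Ge r (d - i)%N)).
      apply: submx_trans (in_Lt p (ltnSn i) (ltn_ord i)) _.
      have -> : i.+1 = (d.+1 - (d - i)%N)%N by lia.
      apply: submx_trans (Lt_sub_pow (d - i)%N HLp Hnz) _.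
      exact: pow_sub_Ge Ru HRr.
    have hdi : (0 < d - i)%N by lia.
    apply: submx_trans (graded_Ge HLr HRr hdi) _.
    apply: submx_trans (Ge_sub_pow _ HRr) _.
    apply: submx_trans (pow_sub_Lt _ Pu HLp) _.
    have -> : (d.+1 - (d - i)%N.+1)%N = i by lia.
    exact: submx_refl.
  have := coord_Lt Pu hz hik.
  have E : p i *m C *m A *m invmx P = (p i *m C *m invmx P) *m MA d phi.
    by rewrite -(mulmxK Pu (MA d phi)) -PA !mulmxA mulmxKV.
  rewrite mulmxBl -scalemxAl E PM_inv_row // mxE.
  have hk1 : (k.+1 < d.+1)%N by [].
  rewrite mxE (@sum_single _ _ _ (inord k.+1)); last first.
    move=> j hj; rewrite !mxE; case: eqP => [e|]; last by rewrite mulr0.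
    by case/eqP: hj; apply: val_inj; rewrite /= inordK.
  rewrite -Nrow !mxE inordK // eqxx /= => /eqP; rewrite subr_eq0 => /eqP ->.
  have [e|ne] := eqVneq k i; first by rewrite e eqxx mulr1.
  have ne' : (nat_of_ord k == nat_of_ord i) = false by apply/negbTE.
  by rewrite ?ne' ?(negbTE ne) mulr0.
have NE : N = MC d phi phi' phi'' a.
  apply/matrixP => i j; rewrite [RHS]mxE.
  case: ifP => [h1|h1].
    have hi : (0 < i)%N by move/eqP: h1 => <-.
    have hj : (j < i)%N by move/eqP: h1 => <-.
    by rewrite (H3 i j hi hj) h1.
  case: ifP => [h2|h2].
    by have -> : j = i by apply: val_inj; apply/eqP; rewrite eq_sym.
  case: ifP => [h3|h3].
    have hid : (i < d)%N by have := ltn_ord j; move/eqP: h3 => ->.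
    have := H4 i i (leqnn _) hid; rewrite eqxx.
    have -> : inord i.+1 = j by apply: val_inj; rewrite /= inordK // (eqP h3).
    have hnz : phi j != 0 by apply: Hnz; rewrite (eqP h3) /=.
    by rewrite -(eqP h3) => <-; rewrite mulfK // (eqP h3).
  have [hji|hij] := ltnP j i.
    by rewrite (H3 i j _ hji) ?h1 //; exact: leq_ltn_trans (leq0n _) hji.
  have hk1 : (i <= j.-1)%N.
    by move: h2 h3 hij; rewrite eq_sym; lia.
  have hk2 : (j.-1 < d)%N by have := ltn_ord j; lia.
  have hk3 : (j.-1 < d.+1)%N by lia.
  have := H4 i (inord j.-1) _ _; rewrite !inordK //.
  have -> : inord j.-1.+1 = j by apply: val_inj; rewrite /= inordK prednK //; lia.
  rewrite prednK; last lia.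
  have -> : (j.-1 == i)%N = false by apply/negbTE; move: h2 h3 hij; rewrite eq_sym; lia.
  move=> /(_ hk1 (ltn_ord j)) /eqP; rewrite mulf_eq0 => /orP [/eqP //|].
  by rewrite (negbTE (Hnz j _)) //; have := ltn_ord j; lia.
by rewrite -NE /N mulmxKV.
Qed.

Lemma conj_eq (F : fieldType) (n : nat) (P P' X X' M : 'M[F]_n) :
  P \in unitmx -> P *m X = M *m P -> P' *m X' = M *m P' ->
  X *m (invmx P *m P') = invmx P *m P' *m X'.
Proof.
move=> Pu PX PX'.
have -> : X = invmx P *m (M *m P) by rewrite -PX mulKmx.
by rewrite -mulmxA PX' !mulmxA mulmxK.
Qed.

Theorem proposition13p41 (F : fieldType) (d : nat)
  (A B C A' B' C' : 'M[F]_(d.+1)) (phi phi' phi'' a a' a'' : nat -> F) :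
  LR_triple A B C -> LR_triple A' B' C' ->
  triple_data A B C phi phi' phi'' a a' a'' ->
  triple_data A' B' C' phi phi' phi'' a a' a'' ->
  LR_iso A B C A' B' C'.
Proof.
move=> _ _ /triple_normal [P [Pu PA PB PC]] /triple_normal [P' [Pu' PA' PB' PC']].
exists (invmx P *m P'); first by rewrite unitmx_mul unitmx_inv Pu Pu'.
by split; [exact: conj_eq Pu PA PA' | exact: conj_eq Pu PB PB' | exact: conj_eq Pu PC PC'].
Qed.
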